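(* Assume $b_1<n^*$ and $b_2<m^*$. (i) For every minimal set cover $S'\subseteq\mathcal V$, $$\max_{\sigma^1\in\Delta(\mathcal A_1):\ \text{node basis of }\sigma^1\subseteq S'}\ \min_{T\in\mathcal A_2}\bigl(-U_2(\sigma^1,T)\bigr)=b_2\Bigl(\frac{b_1}{|S'|}-1\Bigr),$$ and the maximum is attained by $\sigma^1(S',b_1)$. (ii) For every set packing $T'\subseteq\mathcal E$ with $|T'|\ge b_2$, $$\max_{\sigma^2\in\Delta(\mathcal A_2):\ \text{component basis of }\sigma^2\subseteq T'}\ \min_{S\in\mathcal A_1}U_2(S,\sigma^2)=\max\Bigl\{0,\ b_2\Bigl(1-\frac{b_1}{|T'|}\Bigr)\Bigr\},$$ and the maximum is attained by $\sigma^2(T',b_2)$.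
   Context: Detection model: finite nonempty sets $\mathcal V$ (nodes), $\mathcal E$ (components), monitoring sets $\mathcal C_i\subseteq\mathcal E$ for $i\in\mathcal V$ with every $e\in\mathcal E$ in some $\mathcal C_i$; $\mathcal C_S=\bigcup_{i\in S}\mathcal C_i$; $F(S,T)=|\mathcal C_S\cap T|$. A set cover is $S\subseteq\mathcal V$ with $\mathcal C_S=\mathcal E$; it is minimal if no proper subset is a set cover; $n^*$ is the minimum size of a set cover. A set packing is $T\subseteq\mathcal E$ with $|\mathcal C_i\cap T|\le1$ for all $i$; $m^*$ is the maximum size of a set packing. Game $\Gamma(b_1,b_2)$ for positive integers $b_1,b_2$: $\mathcal A_1=\{S\subseteq\mathcal V:|S|\le b_1\}$, $\mathcal A_2=\{T\subseteq\mathcal E:|T|\le b_2\}$, mixed strategies $\sigma^1\in\Delta(\mathcal A_1)$, $\sigma^2\in\Delta(\mathcal A_2)$ drawn independently; $U_1(\sigma^1,\sigma^2)=\mathbb E[F(S,T)]$, $U_2(\sigma^1,\sigma^2)=\mathbb E[|T|]-\mathbb E[F(S,T)]$ with $S\sim\sigma^1$, $T\sim\sigma^2$; pure actions are identified with point masses. Node basis of $\sigma^1$: $\{i:\mathbb P_{\sigma^1}(i\in S)>0\}$; component basis of $\sigma^2$: $\{e:\mathbb P_{\sigma^2}(e\in T)>0\}$. Cyclic strategies: for $S=\{i_1,\dots,i_n\}$ (fixed enumeration) with $n\ge b_1$, $S^k=\{i_k,\dots,i_{k+b_1-1}\}$ with indices cyclic mod $n$, $k=1,\dots,n$, and $\sigma^1(S,b_1)$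 puts probability $1/n$ on each $S^k$; analogously for $T=\{e_1,\dots,e_m\}$ with $m\ge b_2$, $T^l=\{e_l,\dots,e_{l+b_2-1}\}$ cyclically and $\sigma^2(T,b_2)$ puts probability $1/m$ on each $T^l$. *)

(* Defs.v *)
From HB Require Import structures.
From mathcomp Require Import all_boot all_order all_algebra.
Set Implicit Arguments. Unset Strict Implicit. Unset Printing Implicit Defensive.
Import Order.TTheory GRing.Theory Num.Theory.

(* Detection model: V nodes, E components, C i = monitoring set of node i. *)

Definition CS (V E : finType) (C : V -> {set E}) (S : {set V}) : {set E} :=
  \bigcup_(i in S) C i.

Definition Fdet (V E : finType) (C : V -> {set E}) (S : {set V}) (T : {set E}) : nat :=
  #|CS C S :&: T|.

Definition set_cover (V E : finType) (C : V -> {set E}) (S : {set V}) : bool :=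
  CS C S == [set: E].

Definition minimal_set_cover (V E : finType) (C : V -> {set E}) (S : {set V}) : Prop :=
  set_cover C S /\ forall S' : {set V}, S' \proper S -> ~~ set_cover C S'.

(* n^* : minimum size of a set cover (setT is a cover under the coverage assumption) *)
Definition nstar (V E : finType) (C : V -> {set E}) : nat :=
  \big[minn/#|V|]_(S : {set V} | set_cover C S) #|S|.

Definition set_packing (V E : finType) (C : V -> {set E}) (T : {set E}) : bool :=
  [forall i : V, #|C i :&: T| <= 1].

Definition mstar (V E : finType) (C : V -> {set E}) : nat :=
  \max_(T : {set E} | set_packing C T) #|T|.

Local Open Scope ring_scope.

Definition mixed (R : realFieldType) (T : finType) (b : nat) (sigma : {set T} -> R) : Prop :=
  (forall A : {set T}, 0 <= sigma A) /\ (forall A : {set T}, (b < #|A|)%N -> sigma A = 0) /\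
  \sum_(A : {set T}) sigma A = 1.

Definition point (R : realFieldType) (T : finType) (A : {set T}) : {set T} -> R :=
  fun B => if B == A then 1 else 0.

Definition prob_in (R : realFieldType) (T : finType) (sigma : {set T} -> R) (x : T) : R :=
  \sum_(A : {set T} | x \in A) sigma A.

Definition basis_sub (R : realFieldType) (T : finType) (sigma : {set T} -> R) (X : {set T}) : Prop :=
  forall x, 0 < prob_in sigma x -> x \in X.

Definition U1 (R : realFieldType) (V E : finType) (C : V -> {set E})
  (sigma1 : {set V} -> R) (sigma2 : {set E} -> R) : R :=
  \sum_(S : {set V}) \sum_(T : {set E}) sigma1 S * sigma2 T * (Fdet C S T)%:R.

Definition U2 (R : realFieldType) (V E : finType) (C : V -> {set E})
  (sigma1 : {set V} -> R) (sigma2 : {set E} -> R) : R :=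
  \sum_(S : {set V}) \sum_(T : {set E}) sigma1 S * sigma2 T * (#|T|%:R - (Fdet C S T)%:R).

(* Cyclic strategy for the enumeration s = [x_1; ...; x_n] (uniq) and budget b:
   window k (0-indexed) is {x_k, ..., x_{k+b-1}} cyclically = take b (rot k s);
   each of the n windows gets probability 1/n (coinciding windows add up). *)
Definition window (T : finType) (s : seq T) (b k : nat) : {set T} :=
  [set x in take b (rot k s)].

Definition cyclic (R : realFieldType) (T : finType) (s : seq T) (b : nat) : {set T} -> R :=
  fun A => (count (fun k => window s b k == A) (iota 0 (size s)))%:R / (size s)%:R.

(* Main.v *)
Require Import Defs.
From HB Require Import structures.
From mathcomp Require Import all_boot all_order all_algebra.
From mathcomp Require Import zify.
Import Order.TTheory GRing.Theory Num.Theory.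

Lemma nth_rot_mod (T : Type) (x0 : T) (s : seq T) k i :
  k <= size s -> i < size s -> nth x0 (rot k s) i = nth x0 s ((k + i) %% size s).
Proof.
move=> hk hi; rewrite /rot nth_cat size_drop.
case: ltnP => h.
  by rewrite nth_drop modn_small //; lia.
rewrite nth_take; last by lia.
have -> : k + i = (i - (size s - k)) + size s by lia.
by rewrite modnDr modn_small //; lia.
Qed.

Lemma nth_rot_swap (T : Type) (x0 : T) (s : seq T) k i :
  k < size s -> i < size s -> nth x0 (rot k s) i = nth x0 (rot i s) k.
Proof. by move=> hk hi; rewrite !nth_rot_mod 1?addnC // ltnW. Qed.

Local Open Scope ring_scope.

Lemma window_sum (V : nmodType) (T : finType) (s : seq T) b (f : T -> V) :
  uniq s -> (b <= size s)%N ->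
  \sum_(k < size s) \sum_(y in window s b k) f y = (\sum_(y <- s) f y) *+ b.
Proof.
move=> us hb.
case Es: s => [|x0 s'] ; first by rewrite /= big_ord0 big_nil mul0rn.
rewrite -Es.
rewrite (eq_bigr (fun k : 'I_(size s) =>
   \sum_(i < b) f (nth x0 (rot i s) k))); last first.
  move=> k _.
  rewrite (eq_bigl (fun y => y \in take b (rot k s))); last by move=> y; rewrite inE.
  rewrite -big_uniq /=; last by rewrite take_uniq // rot_uniq.
  rewrite (big_nth x0) size_take size_rot.
  have -> : (if (b < size s)%N then b else size s) = b by case: ltnP => //; lia.
  rewrite big_mkord; apply: eq_bigr => i _.
  rewrite nth_take // nth_rot_swap //; exact: leq_trans (ltn_ord i) hb.
rewrite exchange_big /=.
rewrite (eq_bigr (fun _ => \sum_(y <- s) f y)); first by rewrite sumr_const card_ord.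
move=> i _.
have hi : (i <= size s)%N by exact: ltnW (leq_trans (ltn_ord i) hb).
have hp : perm_eq (rot i s) s by rewrite perm_rot.
rewrite -(perm_big _ hp) (big_nth x0) size_rot big_mkord.
by [].
Qed.

Lemma count_sum (T : Type) (p : pred T) (l : seq T) :
  count p l = (\sum_(x <- l) (p x : nat))%N.
Proof. by elim: l => [|x l IH]; rewrite ?big_nil ?big_cons //= IH. Qed.

Lemma cyclic_exp (R : realFieldType) (T : finType) (s : seq T) b (g : {set T} -> R) :
  \sum_(A : {set T}) cyclic R s b A * g A =
  (\sum_(k < size s) g (window s b k)) / (size s)%:R.
Proof.
have E : forall k : 'I_(size s), g (window s b k) =
   \sum_(A : {set T}) ((window s b k == A)%:R * g A).
  move=> k; rewrite (bigD1 (window s b k)) //= eqxx mul1r big1 ?addr0 //.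
  by move=> A; rewrite eq_sym => /negbTE ->; rewrite mul0r.
rewrite (eq_bigr _ (fun k _ => E k)) exchange_big mulr_suml.
apply: eq_bigr => A _; rewrite -mulr_suml /cyclic count_sum natr_sum.
rewrite -(big_mkord xpredT (fun i => (window s b i == A)%:R)) /index_iota subn0.
by rewrite mulrAC.
Qed.

Lemma cardI_sum (T : finType) (A B : {set T}) :
  #|A :&: B| = (\sum_(e in B) (e \in A : nat))%N.
Proof.
rewrite -sum1_card big_mkcond [RHS]big_mkcond /=.
by apply: eq_bigr => e _; rewrite inE; case: (e \in A); case: (e \in B).
Qed.

Lemma pack_le (V E : finType) (C : V -> {set E}) (S : {set V}) (T : {set E}) :
  set_packing C T -> (#|CS C S :&: T| <= #|S|)%N.
Proof.
move=> /forallP hp; rewrite /CS -big_enum [#|S|]cardE.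
elim: (enum S) => [|i l IH]; first by rewrite big_nil set0I cards0.
rewrite big_cons setIUl /=.
apply: leq_trans (leq_card_setU _ _).1 _.
by rewrite -add1n leq_add.
Qed.

Lemma minset_le (V E : finType) (C : V -> {set E}) (S : {set V}) :
  set_cover C S -> (nstar C <= #|S|)%N.
Proof.
move=> hS; rewrite /nstar -big_filter.
have : S \in [seq x <- index_enum _ | set_cover C x] by rewrite mem_filter hS mem_index_enum.
elim: [seq x <- _ | _] => [//|j l IH]; rewrite inE big_cons => /orP [/eqP <-|/IH h].
  exact: geq_minl.
exact: leq_trans (geq_minr _ _) h.
Qed.

Lemma pack_le_mstar (V E : finType) (C : V -> {set E}) (T : {set E}) :
  set_packing C T -> (#|T| <= mstar C)%N.
Proof. by move=> hT; rewrite /mstar (bigD1 T) //= leq_maxl. Qed.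

Lemma mstar_le_cover (V E : finType) (C : V -> {set E}) (S : {set V}) :
  set_cover C S -> (mstar C <= #|S|)%N.
Proof.
move=> /eqP hS; apply/bigmax_leqP => T hT.
by have := @pack_le _ _ C S T hT; rewrite hS setTI.
Qed.

Lemma U2_pointT (R : realFieldType) (V E : finType) (C : V -> {set E})
  (sigma1 : {set V} -> R) (T : {set E}) :
  U2 C sigma1 (point R T) = \sum_(S : {set V}) sigma1 S * (#|T|%:R - (Fdet C S T)%:R).
Proof.
apply: eq_bigr => S _; rewrite (bigD1 T) //= /point eqxx mulr1 big1 ?addr0 //.
by move=> T' /negbTE ->; rewrite mulr0 mul0r.
Qed.

Lemma U2_pointS (R : realFieldType) (V E : finType) (C : V -> {set E})
  (sigma2 : {set E} -> R) (S : {set V}) :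
  U2 C (point R S) sigma2 = \sum_(T : {set E}) sigma2 T * (#|T|%:R - (Fdet C S T)%:R).
Proof.
rewrite /U2 (bigD1 S) //= /point eqxx [X in _ + X]big1 ?addr0; last first.
  by move=> S' /negbTE ->; apply: big1 => T _; rewrite !mul0r.
by apply: eq_bigr => T _; rewrite mul1r.
Qed.

Lemma card_window (T : finType) (s : seq T) b k :
  uniq s -> #|window s b k| = minn b (size s).
Proof.
move=> us; rewrite /window cardsE.
have /card_uniqP -> : uniq (take b (rot k s)) by rewrite take_uniq // rot_uniq.
by rewrite size_take size_rot /minn; case: ltnP.
Qed.

Lemma window_sub (T : finType) (s : seq T) b k x :
  x \in window s b k -> x \in s.
Proof. by rewrite inE => /mem_take; rewrite mem_rot. Qed.

Lemma window_take (T : finType) (s : seq T) b k :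
  window s b k = window s (minn b (size s)) k.
Proof.
rewrite /window /minn; case: ltnP => // h.
by rewrite !take_oversize // size_rot // ltnW.
Qed.

Lemma window_count (R : realFieldType) (T : finType) (s : seq T) b x :
  uniq s -> (b <= size s)%N -> x \in s ->
  \sum_(k < size s) ((x \in window s b k)%:R : R) = b%:R.
Proof.
move=> us hb xs.
have := @window_sum R T s b (fun y => ((y == x)%:R : R)) us hb.
have e1 : \sum_(y <- s) ((y == x)%:R : R) = 1.
  by rewrite -natr_sum -(@count_sum _ (pred1 x)) count_uniq_mem // xs.
rewrite e1 => <-; apply: eq_bigr => k _.
case: (boolP (x \in window s b k)) => hx.
  by rewrite (bigD1 x) //= eqxx big1 ?addr0 // => y /andP [_ /negbTE ->].
by rewrite big1 // => y hy; case: eqP hy hx => // -> ->.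
Qed.

Lemma supp_sub (R : realFieldType) (T : finType) b (sigma : {set T} -> R) (X : {set T}) A :
  mixed b sigma -> basis_sub sigma X -> sigma A != 0 -> A \subset X.
Proof.
move=> [h0 [hb h1]] hX hA; apply/subsetP => x xA; apply: hX.
have hpos : 0 < sigma A by rewrite lt_def hA h0.
apply: (lt_le_trans hpos); rewrite /prob_in (bigD1 A) //= lerDl.
by apply: sumr_ge0 => B _; apply: h0.
Qed.

Lemma avg_exists (R : realFieldType) n (x : 'I_n -> R) (v : R) :
  (0 < n)%N -> \sum_(k < n) x k <= n%:R * v -> exists k, x k <= v.
Proof.
move=> hn hs; case: (boolP [exists k, x k <= v]) => [/existsP [k hk]|/existsPn hk].
  by exists k.
have : \sum_(k < n) v < \sum_(k < n) x k.
  apply: ltr_sum; first by apply/hasP; exists (Ordinal hn); rewrite ?mem_index_enum.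
  by move=> k _; have := hk k; rewrite -ltNge.
by rewrite sumr_const card_ord -mulr_natl ltNge hs.
Qed.

Lemma mixed_cyclic (R : realFieldType) (T : finType) (s : seq T) b :
  uniq s -> (0 < size s)%N -> mixed b (cyclic R s b).
Proof.
move=> us hn; split; [|split].
- by move=> A; rewrite /cyclic divr_ge0 // ler0n.
- move=> A hA; rewrite /cyclic.
  have -> : count (fun k => window s b k == A) (iota 0 (size s)) = 0%N.
    apply/eqP; rewrite eqn0Ngt -has_count; apply/hasPn => k _; apply/eqP => hw.
    move: hA; rewrite -hw card_window //; apply/negP; rewrite -leqNgt; exact: geq_minl.
  by rewrite mul0r.
- transitivity (\sum_(A : {set T}) cyclic R s b A * 1).
    by apply: eq_bigr => A _; rewrite mulr1.
  rewrite cyclic_exp sumr_const card_ord -[X in X / _]mulr_natl mulr1 divff //.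
  by rewrite pnatr_eq0 -lt0n.
Qed.

Lemma basis_cyclic (R : realFieldType) (T : finType) (s : seq T) b (X : {set T}) :
  (forall x, (x \in s) = (x \in X)) -> basis_sub (cyclic R s b) X.
Proof.
move=> hs x; rewrite /prob_in.
have -> : \sum_(A : {set T} | x \in A) cyclic R s b A = \sum_(A : {set T}) cyclic R s b A * (x \in A)%:R.
  rewrite big_mkcond /=; apply: eq_bigr => A _.
  by case: (x \in A); rewrite ?mulr1 ?mulr0.
rewrite cyclic_exp -hs; case: (boolP (x \in s)) => // hx.
rewrite big1 ?mul0r ?ltxx // => k _.
by case: (boolP (x \in window s b k)) => // /window_sub; rewrite (negbTE hx).
Qed.

Lemma cover_ex (V E : finType) (C : V -> {set E}) (S : {set V}) e :
  set_cover C S -> exists i, (i \in S) && (e \in C i).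
Proof.
move=> /eqP hc; have : e \in CS C S by rewrite hc inE.
by move=> /bigcupP [i hi he]; exists i; rewrite hi he.
Qed.

Lemma private_exists (V E : finType) (C : V -> {set E}) (S : {set V}) i :
  minimal_set_cover C S -> i \in S ->
  exists e, (e \in C i) && [forall j in S, (e \in C j) ==> (j == i)].
Proof.
move=> [hc hmin] hi.
case: (boolP [exists e, (e \in C i) && [forall j in S, (e \in C j) ==> (j == i)]]).
  by move=> /existsP.
move=> /existsPn hne; exfalso.
have := hmin _ (properD1 hi); apply/negP; apply/negPn.
apply/eqP/setP => e; rewrite inE.
have [j /andP [hj hej]] := @cover_ex _ _ C S e hc.
case: (eqVneq j i) => [eji|nji].
  move: (hne e); rewrite -eji hej /= => /forallPn [j' ].
  rewrite !negb_imply => /andP [hj' /andP [hej' nj']].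
  by apply/bigcupP; exists j' => //; rewrite !inE nj' hj'.
by apply/bigcupP; exists j => //; rewrite !inE nji hj.
Qed.

Lemma priv_F (V E : finType) (C : V -> {set E}) (S : {set V}) (pe : V -> E) (A W : {set V}) :
  (forall i, i \in S -> pe i \in C i) ->
  (forall i j, i \in S -> j \in S -> pe i \in C j -> j = i) ->
  A \subset S -> W \subset S ->
  Fdet C A (pe @: W) = (\sum_(i in W) (i \in A : nat))%N /\ #|pe @: W| = #|W|.
Proof.
move=> h1 h2 /subsetP hA /subsetP hW.
have inj : {in W &, injective pe}.
  move=> i j hi hj hij; apply: h2; [exact: hW|exact: hW|].
  by rewrite -hij; apply: h1; apply: hW.
split; last exact: card_in_imset.
rewrite /Fdet cardI_sum big_imset //=; apply: eq_bigr => i hi.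
congr nat_of_bool; apply/bigcupP/idP => [[j hj hij]|hiA].
  by have <- := h2 i j (hW _ hi) (hA _ hj) hij.
by exists i => //; apply: h1; apply: hW.
Qed.

From mathcomp Require Import ring lra.

Lemma negU2_cyc (R : realFieldType) (V E : finType) (C : V -> {set E}) (s : seq V) b1 (T : {set E}) :
  - U2 C (cyclic R s b1) (point R T) =
  (\sum_(k < size s) ((Fdet C (window s b1 k) T)%:R - #|T|%:R)) / (size s)%:R.
Proof.
rewrite U2_pointT -sumrN -(@cyclic_exp R _ s b1 (fun A => (Fdet C A T)%:R - #|T|%:R)).
by apply: eq_bigr => A _; rewrite -mulrN opprB.
Qed.

Lemma i_lower (R : realFieldType) (V E : finType) (C : V -> {set E}) (S' : {set V}) (s : seq V)
  b1 b2 (T : {set E}) :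
  set_cover C S' -> uniq s -> (forall i, (i \in s) = (i \in S')) ->
  (b1 <= size s)%N -> (0 < size s)%N -> (#|T| <= b2)%N ->
  b2%:R * (b1%:R / (size s)%:R - 1) <= - U2 C (cyclic R s b1) (point R T).
Proof.
move=> hc us hs hb1 hn hT.
pose h e := xchoose (@cover_ex _ _ C S' e hc).
have hh e : (h e \in S') && (e \in C (h e)) := xchooseP (@cover_ex _ _ C S' e hc).
have hsum : (#|T| * b1)%:R <= \sum_(k < size s) ((Fdet C (window s b1 k) T)%:R : R).
  apply: (@le_trans _ _ (\sum_(k < size s) \sum_(e in T) ((h e \in window s b1 k)%:R : R))).
    rewrite exchange_big /= (eq_bigr (fun _ => b1%:R)); last first.
      move=> e _; apply: window_count => //; rewrite hs.
      by case/andP: (hh e).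
    by rewrite sumr_const natrM mulr_natl.
  apply: ler_sum => k _; rewrite /Fdet cardI_sum natr_sum; apply: ler_sum => e _.
  rewrite ler_nat; case: (boolP (h e \in window s b1 k)) => // hk.
  suff -> : e \in CS C (window s b1 k) by [].
  by apply/bigcupP; exists (h e) => //; case/andP: (hh e).
rewrite negU2_cyc sumrB sumr_const card_ord.
have hn' : 0 < (size s)%:R :> R by rewrite ltr0n.
apply: (@le_trans _ _ (#|T|%:R * (b1%:R / (size s)%:R - 1))).
  apply: ler_wnM2r; last by rewrite ler_nat.
  by rewrite subr_le0 ler_pdivrMr // mul1r ler_nat.
have -> : #|T|%:R * (b1%:R / (size s)%:R - 1) = ((#|T| * b1)%:R - #|T|%:R *+ size s) / (size s)%:R :> R.
  rewrite natrM -mulr_natr; field; lra.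
by apply: ler_wpM2r; [rewrite invr_ge0 ltW | rewrite lerB].
Qed.

Lemma pe_exists (V E : finType) (C : V -> {set E}) (S : {set V}) :
  minimal_set_cover C S -> (0 < #|E|)%N ->
  exists pe : V -> E, (forall i, i \in S -> pe i \in C i) /\
    (forall i j, i \in S -> j \in S -> pe i \in C j -> j = i).
Proof.
move=> hm /card_gt0P [e0 _].
have ex i : exists e, (i \in S) ==> ((e \in C i) && [forall j in S, (e \in C j) ==> (j == i)]).
  case: (boolP (i \in S)) => hi; last by exists e0.
  by have [e he] := @private_exists _ _ C S i hm hi; exists e.
exists (fun i => xchoose (ex i)); split.
  by move=> i hi; have := xchooseP (ex i); move/implyP/(_ hi) => /andP [].
move=> i j hi hj; have := xchooseP (ex i); move/implyP/(_ hi) => /andP [_ /forallP /(_ j)].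
by rewrite hj /= => /implyP h /h /eqP.
Qed.

Lemma sum_window_in (R : realFieldType) (T : finType) (s s' : seq T) b b' k :
  uniq s -> (b <= size s)%N -> (forall x, x \in s' -> x \in s) ->
  \sum_(j < size s) (\sum_(i in window s' b' k) (i \in window s b j : nat))%:R
   = (#|window s' b' k| * b)%:R :> R.
Proof.
move=> us hb hs'.
rewrite (eq_bigr (fun j : 'I_(size s) => \sum_(i in window s' b' k) ((i \in window s b j)%:R : R))); last first.
  by move=> j _; rewrite natr_sum.
rewrite exchange_big /= (eq_bigr (fun _ => b%:R)); last first.
  move=> i hi; apply: window_count => //; apply: hs'; exact: window_sub hi.
by rewrite sumr_const natrM mulr_natl.
Qed.

Lemma count_le (T : finType) (s : seq T) (A : {set T}) :
  uniq s -> (\sum_(i <- s) (i \in A : nat) <= #|A|)%N.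
Proof.
move=> us; rewrite -(@count_sum _ (fun i => i \in A)) -size_filter.
have /card_uniqP <- : uniq [seq i <- s | i \in A] by rewrite filter_uniq.
by apply: subset_leq_card; apply/subsetP => x; rewrite mem_filter => /andP [].
Qed.

Lemma negU2_gen (R : realFieldType) (V E : finType) (C : V -> {set E}) (sigma1 : {set V} -> R) (T : {set E}) :
  - U2 C sigma1 (point R T) = \sum_(A : {set V}) sigma1 A * ((Fdet C A T)%:R - #|T|%:R).
Proof. by rewrite U2_pointT -sumrN; apply: eq_bigr => A _; rewrite -mulrN opprB. Qed.

Lemma i_eq (R : realFieldType) (V E : finType) (C : V -> {set E}) (S' : {set V}) (s : seq V)
  (pe : V -> E) b1 b2 k :
  (forall i, i \in S' -> pe i \in C i) ->
  (forall i j, i \in S' -> j \in S' -> pe i \in C j -> j = i) ->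
  uniq s -> (forall i, (i \in s) = (i \in S')) ->
  (b1 <= size s)%N -> (b2 <= size s)%N -> (0 < size s)%N ->
  #|pe @: window s b2 k| = b2 /\
  - U2 C (cyclic R s b1) (point R (pe @: window s b2 k)) = b2%:R * (b1%:R / (size s)%:R - 1).
Proof.
move=> h1 h2 us hs hb1 hb2 hn.
have sub b j : window s b j \subset S' by apply/subsetP => x /window_sub; rewrite hs.
have cw : #|window s b2 k| = b2 by rewrite card_window //; apply/minn_idPl.
have [_ ->] := @priv_F _ _ C S' pe (window s b1 0) (window s b2 k) h1 h2 (sub _ _) (sub _ _).
split; first exact: cw.
rewrite negU2_cyc.
rewrite (eq_bigr (fun j : 'I_(size s) => (\sum_(i in window s b2 k) (i \in window s b1 j : nat))%:R - (#|window s b2 k|)%:R)); last first.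
  move=> j _; have [-> ->] := @priv_F _ _ C S' pe (window s b1 j) (window s b2 k) h1 h2 (sub _ _) (sub _ _).
  by [].
rewrite sumrB sum_window_in // sumr_const card_ord cw.
have hn' : (size s)%:R != 0 :> R by rewrite pnatr_eq0 -lt0n.
rewrite natrM -mulr_natr; field.
exact: hn'.
Qed.

Lemma i_upper (R : realFieldType) (V E : finType) (C : V -> {set E}) (S' : {set V}) (s : seq V)
  (pe : V -> E) b1 b2 (sigma1 : {set V} -> R) :
  (forall i, i \in S' -> pe i \in C i) ->
  (forall i j, i \in S' -> j \in S' -> pe i \in C j -> j = i) ->
  uniq s -> (forall i, (i \in s) = (i \in S')) ->
  (b2 <= size s)%N -> (0 < size s)%N ->
  mixed b1 sigma1 -> basis_sub sigma1 S' ->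
  exists2 T : {set E}, (#|T| <= b2)%N &
    - U2 C sigma1 (point R T) <= b2%:R * (b1%:R / (size s)%:R - 1).
Proof.
move=> h1 h2 us hs hb2 hn hmix hbas.
have sub b j : window s b j \subset S' by apply/subsetP => x /window_sub; rewrite hs.
have cw k : #|window s b2 k| = b2 by rewrite card_window //; apply/minn_idPl.
have cT k : #|pe @: window s b2 k| = b2.
  by have [_ ->] := @priv_F _ _ C S' pe set0 (window s b2 k) h1 h2 (sub0set _) (sub _ _).
suff [k hk] : exists k : 'I_(size s), - U2 C sigma1 (point R (pe @: window s b2 k)) <=
    b2%:R * (b1%:R / (size s)%:R - 1).
  by exists (pe @: window s b2 k); rewrite ?cT.
apply: avg_exists => //.
have hn' : (size s)%:R != 0 :> R by rewrite pnatr_eq0 -lt0n.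
have -> : (size s)%:R * (b2%:R * (b1%:R / (size s)%:R - 1)) = \sum_(A : {set V}) sigma1 A * ((b2 * b1)%:R - b2%:R *+ size s) :> R.
  rewrite -mulr_suml; case: hmix => _ [_ ->]; rewrite mul1r natrM -mulr_natr; field; exact: hn'.
rewrite (eq_bigr (fun k : 'I_(size s) => \sum_(A : {set V}) sigma1 A * ((Fdet C A (pe @: window s b2 k))%:R - b2%:R))); last first.
  by move=> k _; rewrite negU2_gen cT.
rewrite exchange_big /=; apply: ler_sum => A _.
rewrite -mulr_sumr.
case: (eqVneq (sigma1 A) 0) => [->|hA]; first by rewrite !mul0r.
have hsub := @supp_sub R V b1 sigma1 S' A hmix hbas hA.
case: (hmix) => h0 [hb _].
have hAb : (#|A| <= b1)%N by rewrite leqNgt; apply/negP => /hb /eqP; rewrite (negbTE hA).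
apply: ler_wpM2l; first exact: h0.
rewrite sumrB sumr_const card_ord lerB //.
rewrite (eq_bigr (fun k : 'I_(size s) => \sum_(i in window s b2 k) ((i \in A)%:R : R))); last first.
  move=> k _; have [-> _] := @priv_F _ _ C S' pe A (window s b2 k) h1 h2 hsub (sub _ _).
  by rewrite natr_sum.
rewrite window_sum // natrM mulr_natr.
rewrite -natr_sum -[_ *+ b2]mulr_natr -[_ *+ b1]mulr_natr -!natrM ler_nat.
apply: leq_trans (leq_mul (@count_le _ s A us) (leqnn b2)) _.
by rewrite mulnC leq_mul2l hAb orbT.
Qed.

Lemma vmin (R : realFieldType) b1 b2 m : (0 < m)%N ->
  b2%:R * (1 - (minn b1 m)%:R / m%:R) = Num.max 0 (b2%:R * (1 - b1%:R / m%:R)) :> R.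
Proof.
move=> hm; have hm' : 0 < m%:R :> R by rewrite ltr0n.
case: (leqP b1 m) => h.
  rewrite max_r //; apply: mulr_ge0 => //.
  by rewrite subr_ge0 ler_pdivrMr // mul1r ler_nat.
rewrite divff ?subrr ?mulr0 ?max_l //; last by rewrite gt_eqF.
apply: mulr_ge0_le0 => //; rewrite subr_le0 ler_pdivlMr // mul1r ler_nat; exact: ltnW.
Qed.

Lemma U2_cyc (R : realFieldType) (V E : finType) (C : V -> {set E}) (S : {set V}) (T' : {set E})
  (t : seq E) b2 :
  uniq t -> (forall e, (e \in t) = (e \in T')) -> (b2 <= size t)%N -> (0 < size t)%N ->
  U2 C (point R S) (cyclic R t b2) = b2%:R * (1 - #|CS C S :&: T'|%:R / (size t)%:R).
Proof.
move=> ut ht hb hm.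
have hm' : (size t)%:R != 0 :> R by rewrite pnatr_eq0 -lt0n.
rewrite U2_pointS cyclic_exp.
rewrite (eq_bigr (fun k : 'I_(size t) => b2%:R - (\sum_(e in window t b2 k) ((e \in CS C S)%:R : R)))); last first.
  move=> k _; rewrite card_window // (_ : minn b2 (size t) = b2) ?(elimT minn_idPl hb) // /Fdet cardI_sum natr_sum.
  by [].
rewrite sumrB window_sum // sumr_const card_ord.
have -> : \sum_(y <- t) ((y \in CS C S)%:R : R) = #|CS C S :&: T'|%:R.
  rewrite cardI_sum natr_sum big_uniq //; apply: eq_bigl => e; by rewrite ht.
rewrite -[_ *+ size t]mulr_natr -[_ *+ b2]mulr_natr; field; exact: hm'.
Qed.

Lemma card_enum (T : finType) (t : seq T) (X : {set T}) :
  uniq t -> (forall e, (e \in t) = (e \in X)) -> #|X| = size t.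
Proof. by move=> ut ht; rewrite -(card_uniqP ut); apply: eq_card => e; rewrite ht. Qed.

Lemma ii_cmp (R : realFieldType) b2 c d m : (0 < m)%N -> (c <= d)%N ->
  b2%:R * (1 - d%:R / m%:R) <= b2%:R * (1 - c%:R / m%:R) :> R.
Proof.
move=> hm hcd; apply: ler_wpM2l => //; rewrite lerD2l lerN2.
by apply: ler_wpM2r; [rewrite invr_ge0 ler0n | rewrite ler_nat].
Qed.

Lemma ii_lower (R : realFieldType) (V E : finType) (C : V -> {set E}) (S : {set V}) (T' : {set E})
  (t : seq E) b1 b2 :
  set_packing C T' -> uniq t -> (forall e, (e \in t) = (e \in T')) -> (b2 <= size t)%N -> (0 < size t)%N ->
  (#|S| <= b1)%N ->
  Num.max 0 (b2%:R * (1 - b1%:R / (size t)%:R)) <= U2 C (point R S) (cyclic R t b2).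
Proof.
move=> hp ut ht hb hm hS.
rewrite (@U2_cyc R V E C S T' t b2 ut) // -vmin //; apply: ii_cmp => //.
rewrite leq_min; apply/andP; split.
  exact: leq_trans (@pack_le _ _ C S T' hp) hS.
by rewrite -(@card_enum _ t T' ut ht) subset_leq_card // subsetIr.
Qed.

Lemma ii_eq (R : realFieldType) (V E : finType) (C : V -> {set E}) (T' : {set E})
  (t : seq E) b1 b2 (hv : E -> V) :
  (forall e, e \in C (hv e)) ->
  set_packing C T' -> uniq t -> (forall e, (e \in t) = (e \in T')) -> (b2 <= size t)%N -> (0 < size t)%N ->
  exists2 S : {set V}, (#|S| <= b1)%N &
    U2 C (point R S) (cyclic R t b2) = Num.max 0 (b2%:R * (1 - b1%:R / (size t)%:R)).
Proof.
move=> hh hp ut ht hb hm.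
set W := window t b1 0.
have cW : #|W| = minn b1 (size t) by rewrite card_window.
have cS : (#|hv @: W| <= minn b1 (size t))%N by rewrite -cW leq_imset_card.
exists (hv @: W); first exact: leq_trans cS (geq_minl _ _).
rewrite (@U2_cyc R V E C _ T' t b2 ut) // -vmin //.
suff -> : #|CS C (hv @: W) :&: T'| = minn b1 (size t) by [].
apply/eqP; rewrite eqn_leq; apply/andP; split.
  exact: leq_trans (@pack_le _ _ C _ T' hp) cS.
rewrite -cW; apply: subset_leq_card; apply/subsetP => e he; rewrite inE.
apply/andP; split; last by rewrite -ht; exact: window_sub he.
by apply/bigcupP; exists (hv e) => //; apply: imset_f.
Qed.

Lemma ii_upper (R : realFieldType) (V E : finType) (C : V -> {set E}) (T' : {set E})
  (t : seq E) b1 b2 (hv : E -> V) (sigma2 : {set E} -> R) :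
  (forall e, e \in C (hv e)) ->
  uniq t -> (forall e, (e \in t) = (e \in T')) -> (0 < size t)%N ->
  mixed b2 sigma2 -> basis_sub sigma2 T' ->
  exists2 S : {set V}, (#|S| <= b1)%N &
    U2 C (point R S) sigma2 <= Num.max 0 (b2%:R * (1 - b1%:R / (size t)%:R)).
Proof.
move=> hh ut ht hm hmix hbas.
set b' := minn b1 (size t).
have hb' : (b' <= size t)%N by apply: geq_minr.
have cW k : #|window t b1 k| = b' by rewrite card_window.
have cS k : (#|hv @: window t b1 k| <= b1)%N.
  by apply: leq_trans (leq_imset_card _ _) _; rewrite cW geq_minl.
suff [k hk] : exists k : 'I_(size t), U2 C (point R (hv @: window t b1 k)) sigma2 <=
    Num.max 0 (b2%:R * (1 - b1%:R / (size t)%:R)).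
  by exists (hv @: window t b1 k).
apply: avg_exists => //.
have hm' : (size t)%:R != 0 :> R by rewrite pnatr_eq0 -lt0n.
rewrite -vmin //.
have -> : (size t)%:R * (b2%:R * (1 - b'%:R / (size t)%:R)) = \sum_(A : {set E}) sigma2 A * (b2%:R * ((size t)%:R - b'%:R)) :> R.
  rewrite -mulr_suml; case: hmix => _ [_ ->]; rewrite mul1r; field; exact: hm'.
rewrite (eq_bigr (fun k : 'I_(size t) => \sum_(A : {set E}) sigma2 A * (#|A|%:R - (Fdet C (hv @: window t b1 k) A)%:R))); last first.
  by move=> k _; rewrite U2_pointS.
rewrite exchange_big /=; apply: ler_sum => A _.
rewrite -mulr_sumr.
case: (eqVneq (sigma2 A) 0) => [->|hA]; first by rewrite !mul0r.
have hsub := @supp_sub R E b2 sigma2 T' A hmix hbas hA.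
case: (hmix) => h0 [hb _].
have hAb : (#|A| <= b2)%N by rewrite leqNgt; apply/negP => /hb /eqP; rewrite (negbTE hA).
apply: ler_wpM2l; first exact: h0.
rewrite sumrB sumr_const card_ord.
have hF : (#|A| * b')%:R <= \sum_(k < size t) ((Fdet C (hv @: window t b1 k) A)%:R : R).
  apply: (@le_trans _ _ (\sum_(k < size t) \sum_(e in window t b' k) ((e \in A)%:R : R))).
    rewrite window_sum //.
    have -> : \sum_(y <- t) ((y \in A)%:R : R) = #|A|%:R.
      have -> : #|A| = #|A :&: T'| by rewrite (setIidPl hsub).
      rewrite cardI_sum natr_sum big_uniq //; apply: eq_bigl => e; by rewrite ht.
    by rewrite natrM mulr_natr.
  apply: ler_sum => k _; rewrite -natr_sum ler_nat -cardI_sum -window_take /Fdet.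
  apply: subset_leq_card; apply/subsetP => e; rewrite !inE => /andP [heA he].
  rewrite heA andbT; apply/bigcupP; exists (hv e) => //; apply: imset_f.
  by rewrite inE.
have h1 : (#|A|%:R : R) <= b2%:R by rewrite ler_nat.
have h2 : (b'%:R : R) <= (size t)%:R by rewrite ler_nat.
have h3 : (#|A|%:R : R) * ((size t)%:R - b'%:R) <= b2%:R * ((size t)%:R - b'%:R).
  by apply: ler_wpM2r => //; rewrite subr_ge0.
move: hF h3; rewrite natrM -mulr_natr; lra.
Qed.

Theorem proposition1 (R : realFieldType) (V E : finType) (C : V -> {set E})
  (b1 b2 : nat)
  (hV : (0 < #|V|)%N) (hE : (0 < #|E|)%N)
  (hcov : forall e : E, exists i : V, e \in C i)
  (hb1 : (0 < b1)%N) (hb2 : (0 < b2)%N)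
  (hn : (b1 < nstar C)%N) (hm : (b2 < mstar C)%N) :
  (* (i) *)
  (forall (S' : {set V}) (s : seq V),
     minimal_set_cover C S' -> uniq s -> (forall i, (i \in s) = (i \in S')) ->
     let v := b2%:R * (b1%:R / #|S'|%:R - 1) : R in
     [/\ mixed b1 (cyclic R s b1), basis_sub (cyclic R s b1) S',
         (forall T : {set E}, (#|T| <= b2)%N -> v <= - U2 C (cyclic R s b1) (point R T)),
         (exists2 T : {set E}, (#|T| <= b2)%N & - U2 C (cyclic R s b1) (point R T) = v) &
         (forall sigma1 : {set V} -> R, mixed b1 sigma1 -> basis_sub sigma1 S' ->
            exists2 T : {set E}, (#|T| <= b2)%N & - U2 C sigma1 (point R T) <= v)])
  /\
  (* (ii) *)
  (forall (T' : {set E}) (t : seq E),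
     set_packing C T' -> (b2 <= #|T'|)%N -> uniq t -> (forall e, (e \in t) = (e \in T')) ->
     let v := Num.max 0 (b2%:R * (1 - b1%:R / #|T'|%:R)) : R in
     [/\ mixed b2 (cyclic R t b2), basis_sub (cyclic R t b2) T',
         (forall S : {set V}, (#|S| <= b1)%N -> v <= U2 C (point R S) (cyclic R t b2)),
         (exists2 S : {set V}, (#|S| <= b1)%N & U2 C (point R S) (cyclic R t b2) = v) &
         (forall sigma2 : {set E} -> R, mixed b2 sigma2 -> basis_sub sigma2 T' ->
            exists2 S : {set V}, (#|S| <= b1)%N & U2 C (point R S) sigma2 <= v)]).
Proof.
split.
  move=> S' s hmin us hs v; rewrite /v.
  have hc := hmin.1.
  have hcard : #|S'| = size s := @card_enum _ s S' us hs.
  rewrite hcard.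
  have hb1n : (b1 < size s)%N.
    by rewrite -hcard; exact: leq_trans hn (@minset_le _ _ C S' hc).
  have hb2n : (b2 < size s)%N.
    by rewrite -hcard; exact: leq_trans hm (@mstar_le_cover _ _ C S' hc).
  have hnpos : (0 < size s)%N by exact: leq_ltn_trans (leq0n b1) hb1n.
  have [pe [h1 h2]] := @pe_exists _ _ C S' hmin hE.
  split.
  - exact: mixed_cyclic.
  - exact: basis_cyclic.
  - by move=> T hT; apply: (@i_lower R V E C S' s b1 b2 T hc us hs (ltnW hb1n) hnpos hT).
  - have [cT heq] := @i_eq R V E C S' s pe b1 b2 0 h1 h2 us hs (ltnW hb1n) (ltnW hb2n) hnpos.
    by exists (pe @: window s b2 0); rewrite ?cT.
  - by move=> sigma1 hm1 hb; apply: (@i_upper R V E C S' s pe b1 b2 sigma1) => //; exact: ltnW.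
move=> T' t hp hbT ut ht v; rewrite /v.
have hcard : #|T'| = size t := @card_enum _ t T' ut ht.
rewrite hcard; rewrite hcard in hbT.
have hmpos : (0 < size t)%N by exact: leq_trans hb2 hbT.
pose hv e := xchoose (hcov e).
have hh e : e \in C (hv e) := xchooseP (hcov e).
split.
- exact: mixed_cyclic.
- exact: basis_cyclic.
- by move=> S hS; apply: (@ii_lower R V E C S T' t b1 b2 hp ut ht hbT hmpos hS).
- exact: (@ii_eq R V E C T' t b1 b2 hv).
- by move=> sigma2 hm2 hb; apply: (@ii_upper R V E C T' t b1 b2 hv).
Qed.
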